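(* For every fan $F$ there is a homomorphism $c:F\to T_7$ such that $c(r(F))=0$, $c(fl(F))\neq 0$ and $c(ll(F))\neq 0$.
   Context: $T_7$ is the tournament with vertex set $\{0,1,\dots,6\}$ in which $(i,j)$ is an arc if and only if $j-i\equiv 1,2,$ or $4 \pmod 7$. A homomorphism $c:F\to T_7$ of an oriented graph $F$ is a map on vertices such that $(c(u),c(v))$ is an arc of $T_7$ whenever $(u,v)$ is an arc of $F$. A fan $F$ is an oriented planar graph consisting of an oriented rooted plane tree (children of each vertex linearly ordered, as given by the planar embedding) with root $r=r(F)$, whose leaves (the vertices other than the root with no children), listed in left-to-right order, are $x_1,\dots,x_m$ ($m\ge 1$), together with, for each $1\le i\le m-1$, one arc between $x_i$ and $x_{i+1}$ (either $(x_i,x_{i+1})$ or $(x_{i+1},x_i)$). Write $fl(F)=x_1$ and $ll(F)=x_m$. *)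

(* Defs.v *)
From mathcomp Require Import all_boot.
Set Implicit Arguments. Unset Strict Implicit. Unset Printing Implicit Defensive.

Definition T7arc (i j : 'I_7) : bool := ((j + 7 - i) %% 7) \in [:: 1; 2; 4].

(* Oriented rooted plane trees: a node is the ordered (left-to-right) list of
   its children; each child comes with the orientation of the tree edge
   joining it to its parent: true = (parent, child), false = (child, parent). *)
Inductive ptree : Type := Node of seq (bool * ptree).

(* Vertices are addressed by paths from the root: [::] is the root, and
   i :: p is vertex p inside the i-th child subtree (children numbered from 0). *)
Definition vertex := seq nat.

Fixpoint tree_arcs (t : ptree) : seq (vertex * vertex) :=
  let: Node cs := t in
  (fix go (i : nat) (cs : seq (bool * ptree)) : seq (vertex * vertex) :=
     match cs with
     | [::] => [::]
     | (o, t') :: cs' =>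
         (if o then ([::], [:: i]) else ([:: i], [::]))
           :: map (fun e => (i :: e.1, i :: e.2)) (tree_arcs t')
           ++ go i.+1 cs'
     end) 0 cs.

Fixpoint sub_leaves (t : ptree) : seq vertex :=
  let: Node cs := t in
  match cs with
  | [::] => [:: [::]]
  | _ =>
    (fix go (i : nat) (cs : seq (bool * ptree)) : seq vertex :=
       match cs with
       | [::] => [::]
       | (_, t') :: cs' => map (cons i) (sub_leaves t') ++ go i.+1 cs'
       end) 0 cs
  end.

(* A fan: an oriented rooted plane tree whose root has at least one child
   (so that m >= 1 and the root is not a leaf), together with, for each
   1 <= i <= m-1, the orientation of the arc between x_i and x_(i+1):
   true = (x_i, x_(i+1)), false = (x_(i+1), x_i). *)
Record fan := Fan {
  fan_tree : ptree;
  fan_path : seq bool;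
  fan_root_nonleaf : let: Node cs := fan_tree in 0 < size cs;
  fan_path_size : size fan_path = (size (sub_leaves fan_tree)).-1 }.

Definition leaves (F : fan) : seq vertex := sub_leaves (fan_tree F).

Definition fan_root (F : fan) : vertex := [::].
Definition fl (F : fan) : vertex := head [::] (leaves F).
Definition ll (F : fan) : vertex := last [::] (leaves F).

Definition path_arcs (F : fan) : seq (vertex * vertex) :=
  [seq (let x := nth [::] (leaves F) i in
        let y := nth [::] (leaves F) i.+1 in
        if nth true (fan_path F) i then (x, y) else (y, x))
  | i <- iota 0 (size (fan_path F))].

Definition fan_arcs (F : fan) : seq (vertex * vertex) :=
  tree_arcs (fan_tree F) ++ path_arcs F.

(* c is a homomorphism F -> T_7 (c is given on all addresses; only its values
   on vertices of F matter). *)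
Definition is_hom (F : fan) (c : vertex -> 'I_7) : Prop :=
  forall e, e \in fan_arcs F -> T7arc (c e.1) (c e.2).

(* Main.v *)
Require Import Defs.
From mathcomp Require Import all_boot.
Set Implicit Arguments. Unset Strict Implicit. Unset Printing Implicit Defensive.

Definition arcn (x y : nat) := ((y + 7 - x) %% 7) \in [:: 1; 2; 4].
Definition phin (a b x : nat) := (a * x + b) %% 7.
Definition oarcn (o : bool) x y := if o then arcn x y else arcn y x.
Definition I7 := iota 0 7.

Lemma phi_hom_b : all (fun a => all (fun b => all (fun x => all (fun y =>
  arcn x y ==> arcn (phin a b x) (phin a b y)) I7) I7) I7) [:: 1; 2; 4].
Proof. by vm_compute. Qed.

Lemma choice_b : all (fun o => all (fun d => all (fun u => all (fun f => all (fun g =>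
  (u != 0) ==> has (fun a => has (fun b =>
     [&& oarcn o 0 b, phin a b f != 0, phin a b g != 0 &
        oarcn d u (phin a b f)]) I7) [:: 1; 2; 4]) I7) I7) I7) [:: true; false]) [:: true; false].
Proof. by vm_compute. Qed.

Lemma choice0_b : all (fun o => all (fun f => all (fun g =>
  has (fun a => has (fun b =>
     [&& oarcn o 0 b, phin a b f != 0 & phin a b g != 0]) I7) [:: 1; 2; 4]) I7) I7) [:: true; false].
Proof. by vm_compute. Qed.

Definition phi (a b : nat) (x : 'I_7) : 'I_7 := inord (phin a b x).
Lemma phiE a b x : val (phi a b x) = phin a b x.
Proof. by rewrite /phi /= inordK // ltn_pmod. Qed.

Definition oarc (o : bool) (x y : 'I_7) := if o then T7arc x y else T7arc y x.
Lemma oarcE o x y : oarc o x y = oarcn o (val x) (val y).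
Proof. by []. Qed.

Lemma phi_hom a b x y : a \in [:: 1; 2; 4] -> b < 7 -> T7arc x y -> T7arc (phi a b x) (phi a b y).
Proof.
move=> Ha Hb Hxy.
move/allP: phi_hom_b => /(_ a Ha) /allP /(_ b) H.
have Hb' : b \in I7 by rewrite mem_iota.
move: (H Hb') => /allP /(_ (val x)) H2.
have Hx : val x \in I7 by rewrite mem_iota ltn_ord.
have Hy : val y \in I7 by rewrite mem_iota ltn_ord.
move: (H2 Hx) => /allP /(_ (val y) Hy) /implyP /(_ Hxy).
by rewrite /T7arc !phiE.
Qed.

Lemma ophi_hom a b o x y : a \in [:: 1; 2; 4] -> b < 7 -> oarc o x y -> oarc o (phi a b x) (phi a b y).
Proof. by case: o => /= Ha Hb; apply: phi_hom. Qed.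

Lemma phi0 a b : b < 7 -> phi a b ord0 = inord b.
Proof. by move=> Hb; apply: val_inj; rewrite phiE /= inordK // /phin muln0 add0n modn_small. Qed.

Lemma choice o d (u f g : 'I_7) : val u != 0 -> exists a b,
  [/\ a \in [:: 1; 2; 4], b < 7, oarcn o 0 b, (phin a b f != 0) && (phin a b g != 0) &
     oarcn d u (phin a b f)].
Proof.
move=> Hu.
have Ho : o \in [:: true; false] by case: o.
have Hd : d \in [:: true; false] by case: d.
have Hu' : val u \in I7 by rewrite mem_iota ltn_ord.
have Hf : val f \in I7 by rewrite mem_iota ltn_ord.
have Hg : val g \in I7 by rewrite mem_iota ltn_ord.
move/allP: choice_b => /(_ o Ho) /allP /(_ d Hd) /allP /(_ _ Hu') /allP /(_ _ Hf)
  /allP /(_ _ Hg) /implyP /(_ Hu) /hasP [a Ha] /hasP [b Hb] /and4P [H1 H2 H3 H4].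
exists a, b; split=> //; first by move: Hb; rewrite mem_iota.
by rewrite H2 H3.
Qed.

Lemma choice0 o (f g : 'I_7) : exists a b,
  [/\ a \in [:: 1; 2; 4], b < 7, oarcn o 0 b, phin a b f != 0 & phin a b g != 0].
Proof.
have Ho : o \in [:: true; false] by case: o.
have Hf : val f \in I7 by rewrite mem_iota ltn_ord.
have Hg : val g \in I7 by rewrite mem_iota ltn_ord.
move/allP: choice0_b => /(_ o Ho) /allP /(_ _ Hf)
  /allP /(_ _ Hg) /hasP [a Ha] /hasP [b Hb] /and3P [H1 H2 H3].
exists a, b; split=> //. by move: Hb; rewrite mem_iota.
Qed.

Fixpoint arcsL (i : nat) (cs : seq (bool * ptree)) : seq (vertex * vertex) :=
  match cs with
  | [::] => [::]
  | (o, t') :: cs' =>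
      (if o then ([::], [:: i]) else ([:: i], [::]))
        :: map (fun e => (i :: e.1, i :: e.2)) (tree_arcs t') ++ arcsL i.+1 cs'
  end.

Lemma tree_arcsE cs : tree_arcs (Node cs) = arcsL 0 cs.
Proof. by []. Qed.

Fixpoint leavesL (i : nat) (cs : seq (bool * ptree)) : seq vertex :=
  match cs with
  | [::] => [::]
  | (_, t') :: cs' => map (cons i) (sub_leaves t') ++ leavesL i.+1 cs'
  end.

Lemma sub_leavesE cs : sub_leaves (Node cs) = if cs is [::] then [:: [::]] else leavesL 0 cs.
Proof. by case: cs. Qed.

Definition allPt (P : ptree -> Prop) (cs : seq (bool * ptree)) : Prop :=
  foldr (fun x acc => P x.2 /\ acc) True cs.

Fixpoint ptree_ind2 (P : ptree -> Prop) (H : forall cs, allPt P cs -> P (Node cs))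
  (t : ptree) {struct t} : P t :=
  match t with
  | Node cs => H cs ((fix go (cs : seq (bool * ptree)) : allPt P cs :=
      match cs with
      | [::] => I
      | (o, t') :: cs' => conj (ptree_ind2 H t') (go cs')
      end) cs)
  end.

Lemma allP_all (P : ptree -> Prop) cs : (forall t, P t) -> allPt P cs.
Proof. by move=> H; elim: cs => [|[o t] cs IH] //=. Qed.

Lemma leavesL_nil i cs : allPt (fun t => 0 < size (sub_leaves t)) cs ->
  (size (leavesL i cs) == 0) = (size cs == 0).
Proof.
case: cs => [|[o t] cs] //= [H _].
by rewrite size_cat size_map; case: (size (sub_leaves t)) H.
Qed.

Lemma size_sub_leaves t : 0 < size (sub_leaves t).
Proof.
elim/ptree_ind2: t => cs IH; rewrite sub_leavesE.
case: cs IH => [|x cs] // IH.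
have := leavesL_nil 0 IH. by rewrite lt0n => ->.
Qed.

Definition vin (i : nat) (v : vertex) := if v is j :: _ then i <= j else true.

Lemma arcsL_idx i cs e : e \in arcsL i cs -> vin i e.1 && vin i e.2.
Proof.
elim: cs i => [|[o t] cs IH] i //=.
rewrite inE mem_cat => /orP [/eqP -> | /orP [/mapP [e' _ ->] | H]].
- by case: o => /=; rewrite leqnn.
- by rewrite /= leqnn.
- move/andP: (IH _ H) => [H1 H2].
  apply/andP; split.
  + by case: e.1 H1 => //= j _ /ltnW.
  + by case: e.2 H2 => //= j _ /ltnW.
Qed.

Lemma leavesL_idx i cs v : v \in leavesL i cs -> if v is j :: _ then i <= j else false.
Proof.
elim: cs i => [|[o t] cs IH] i //=.
rewrite mem_cat => /orP [/mapP [v' _ ->] // | H].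
by move: (IH _ H) => {IH H}; case: v => //= j q /ltnW.
Qed.

Definition pathOK (L : seq vertex) (p : seq bool) (c : vertex -> 'I_7) :=
  forall j, j < size p -> oarc (nth true p j) (c (nth [::] L j)) (c (nth [::] L j.+1)).

Lemma pathOK_eq L p c c' : c =1 c' -> pathOK L p c -> pathOK L p c'.
Proof. by move=> E H j Hj; rewrite -!E; apply: H. Qed.

Lemma pathOK_in L p c c' : size p = (size L).-1 -> {in L, c =1 c'} ->
  pathOK L p c -> pathOK L p c'.
Proof.
move=> Hs E H j Hj.
have Hj1 : j.+1 < size L by move: Hj; rewrite Hs; case: (size L).
rewrite -!E; [by apply: H | apply: mem_nth => // | apply: mem_nth].
exact: ltnW.
Qed.

Lemma pathOK_map i L p c : size p = (size L).-1 ->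
  pathOK L p (fun q => c (i :: q)) -> pathOK (map (cons i) L) p c.
Proof.
move=> Hs H j Hj.
have Hj1 : j.+1 < size L by move: Hj; rewrite Hs; case: (size L).
rewrite !(nth_map [::] [::]) //; [exact: H | exact: ltnW].
Qed.

Lemma pathOK_phi a b L p c : a \in [:: 1; 2; 4] -> b < 7 ->
  pathOK L p c -> pathOK L p (fun q => phi a b (c q)).
Proof. by move=> Ha Hb H j Hj; apply: ophi_hom => //; apply: H. Qed.

Lemma nth_catr (T : Type) (x0 : T) s1 s2 m : nth x0 (s1 ++ s2) (size s1 + m) = nth x0 s2 m.
Proof. by elim: s1. Qed.

Lemma pathOK_cat A B p1 d p2 c : size p1 = (size A).-1 -> 0 < size A ->
  pathOK A p1 c -> oarc d (c (last [::] A)) (c (head [::] B)) -> pathOK B p2 c ->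
  pathOK (A ++ B) (p1 ++ d :: p2) c.
Proof.
move=> Hs HA H1 Hd H2 j Hj.
have HA' : size A = (size p1).+1 by rewrite Hs prednK.
case: (ltngtP j (size p1)) => Hjp.
- rewrite nth_cat Hjp !nth_cat HA' ltnS (ltnW Hjp) ltnS Hjp; exact: H1.
- have [k Ek] : exists k, j = (size p1).+1 + k by exists (j - (size p1).+1); rewrite subnKC.
  have E1 : j = size p1 + k.+1 by rewrite Ek addSnnS.
  have E2 : j = size A + k by rewrite Ek HA'.
  have E3 : j.+1 = size A + k.+1 by rewrite E2 addnS.
  rewrite {1}E1 nth_catr /= {1}E2 nth_catr E3 nth_catr.
  apply: H2.
  by move: Hj; rewrite size_cat /= E1 ltn_add2l.
- subst j. rewrite nth_cat ltnn subnn /= !nth_cat HA' ltnSn ltnn subnn.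
  rewrite (last_nth [::]) -[X in nth _ _ X](prednK HA) /= in Hd.
  rewrite Hs; move: Hd; rewrite -(prednK HA).
  by case: B H2 => [|x B] /=.
Qed.

Definition Q (t : ptree) := forall p, size p = (size (sub_leaves t)).-1 ->
  exists c : vertex -> 'I_7, [/\ c [::] = ord0,
     (forall e, e \in tree_arcs t -> T7arc (c e.1) (c e.2)) & pathOK (sub_leaves t) p c].

Definition conOK (con : option (bool * 'I_7)) x := if con is Some (d, u) then oarc d u x else true.
Definition conNZ (con : option (bool * 'I_7)) := if con is Some (_, u) then val u != 0 else true.

Lemma LL cs : allPt Q cs -> forall i p con, 0 < size cs ->
  size p = (size (leavesL i cs)).-1 -> conNZ con ->
  exists c : vertex -> 'I_7, [/\ c [::] = ord0,
    (forall e, e \in arcsL i cs -> T7arc (c e.1) (c e.2)),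
    pathOK (leavesL i cs) p c,
    (val (c (head [::] (leavesL i cs))) != 0) && (val (c (last [::] (leavesL i cs))) != 0) &
    conOK con (c (head [::] (leavesL i cs)))].
Proof.
elim: cs => [|[o t] cs IH] //= [Qt Qcs] i p con _ Hs Hcon.
have [x [L' EL]] : exists x L', sub_leaves t = x :: L'.
  by move: (size_sub_leaves t); case: (sub_leaves t) => [|x L'] // _; exists x, L'.
set p1 := take (size L') p.
have Hs' : size p = size L' + size (leavesL i.+1 cs).
  by rewrite Hs size_cat size_map EL.
have Hp1 : size p1 = (size (sub_leaves t)).-1.
  by rewrite size_takel ?EL // Hs' leq_addr.
have [c1 [c1r c1a c1p]] := Qt p1 Hp1.
set f := c1 x. set g := c1 (last x L').
have [a [b [Ha Hb Ho Hnz Hc]]] : exists a b, [/\ a \in [:: 1; 2; 4], b < 7, oarcn o 0 b,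
    (phin a b f != 0) && (phin a b g != 0) & conOK con (phi a b f)].
  case: con Hcon => [[d u]|] /=.
  - move=> Hu; have [a [b [? ? ? ? H]]] := choice o d f g Hu.
    by exists a, b; split=> //; rewrite oarcE phiE.
  - move=> _; have [a [b [? ? ? ? ?]]] := choice0 o f g.
    by exists a, b; split=> //; apply/andP.
have Hroot : oarc o ord0 (phi a b (c1 [::])).
  by rewrite oarcE c1r phiE /= /phin muln0 add0n modn_small.
move/andP: Hnz => [Hf Hg].
have HA : 0 < size (map (cons i) (sub_leaves t)) by rewrite size_map EL.
have Hlast : last [::] (map (cons i) (sub_leaves t)) = i :: last x L'.
  by rewrite EL /= last_map.
have Hhead : head [::] (map (cons i) (sub_leaves t) ++ leavesL i.+1 cs) = i :: x by rewrite EL.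
have Hmap : forall c : vertex -> 'I_7, (forall q, c (i :: q) = phi a b (c1 q)) ->
    pathOK (map (cons i) (sub_leaves t)) p1 c.
  move=> c Ec; apply: pathOK_map => //.
  apply: (@pathOK_eq _ _ (fun q => phi a b (c1 q))) => // q.
  exact: pathOK_phi.
have Harc1 : forall c : vertex -> 'I_7, c [::] = ord0 -> (forall q, c (i :: q) = phi a b (c1 q)) ->
    (forall e, e \in map (fun e => (i :: e.1, i :: e.2)) (tree_arcs t) -> T7arc (c e.1) (c e.2))
    /\ T7arc (c (if o then ([::], [:: i]) else ([:: i], [::])).1)
             (c (if o then ([::], [:: i]) else ([:: i], [::])).2).
  move=> c E0 Ec; split.
  - move=> e /mapP [e' He' ->] /=; rewrite !Ec; apply: phi_hom => //; exact: c1a.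
  - by move: Hroot; rewrite -E0 -Ec; case: o {Ho}.
case Ecs: cs => [|y cs'].
-
  pose c (v : vertex) : 'I_7 := if v is j :: q then (if j == i then phi a b (c1 q) else ord0) else ord0.
  have Ec : forall q, c (i :: q) = phi a b (c1 q) by move=> q; rewrite /c eqxx.
  have [Ha1 Ha2] := Harc1 c erefl Ec.
  have Ep : p1 = p.
    rewrite /p1 take_oversize //; move: Hs; rewrite Ecs /= cats0 size_map EL /= => ->.
    by [].
  exists c; split => //.
  + move=> e; rewrite inE mem_cat => /orP [/eqP -> // | /orP [/Ha1 // | //]].
  + by rewrite /= cats0 -Ep; apply: Hmap.
  + rewrite /= cats0 Hlast; move: Hhead; rewrite Ecs /= cats0 => ->.
    by rewrite !Ec !phiE Hf /= eqxx phiE Hg.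
  + by move: Hhead; rewrite Ecs /= cats0 => ->; rewrite Ec.
- rewrite -Ecs.
  have HB : 0 < size (leavesL i.+1 cs).
    have := leavesL_nil i.+1 (allP_all cs (fun t => size_sub_leaves t)).
    by rewrite lt0n Ecs => ->.
  have Hsp : size L' < size p.
    by rewrite Hs' -addn1 leq_add2l.
  set d := nth true p (size L').
  set p2 := drop (size L').+1 p.
  have Ep : p = p1 ++ d :: p2 by rewrite /p1 /d /p2 -drop_nth // cat_take_drop.
  have Hp2 : size p2 = (size (leavesL i.+1 cs)).-1.
    by rewrite size_drop Hs' subnS addKn.
  have Hcs : 0 < size cs by rewrite Ecs.
  have Hcon2 : conNZ (Some (d, phi a b g)) by rewrite /= phiE.
  have [c2 [c2r c2a c2p c2nz c2c]] := IH Qcs i.+1 p2 (Some (d, phi a b g)) Hcs Hp2 Hcon2.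
  pose c (v : vertex) : 'I_7 := if v is j :: q then (if j == i then phi a b (c1 q) else c2 v) else ord0.
  have Ec : forall q, c (i :: q) = phi a b (c1 q) by move=> q; rewrite /c eqxx.
  have E2 : forall v, vin i.+1 v -> c v = c2 v.
    by case=> [|j q] /= H; [rewrite c2r | rewrite gtn_eqF].
  have E2' : {in leavesL i.+1 cs, c2 =1 c}.
    move=> v /leavesL_idx; case: v => [|j q] // H; symmetry; exact: E2.
  have [Ha1 Ha2] := Harc1 c erefl Ec.
  have HlB : last [::] (leavesL i.+1 cs) \in leavesL i.+1 cs.
    by case: (leavesL i.+1 cs) HB => [|z B] //= _; apply: mem_last.
  have HhB : head [::] (leavesL i.+1 cs) \in leavesL i.+1 cs.
    by case: (leavesL i.+1 cs) HB => [|z B] //= _; rewrite inE eqxx.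
  exists c; split => //.
  + move=> e; rewrite inE mem_cat => /orP [/eqP -> // | /orP [/Ha1 // | He]].
    by move/andP: (arcsL_idx He) => [H1 H2]; rewrite !E2 //; apply: c2a.
  + rewrite Ep; apply: pathOK_cat => //.
    * by rewrite size_map Hp1.
    * exact: Hmap.
    * by rewrite Hlast Ec -(E2' _ HhB).
    * exact: pathOK_in Hp2 E2' c2p.
  + rewrite Hhead Ec phiE Hf /= last_cat.
    case: (leavesL i.+1 cs) HB c2nz HlB E2' => [|z B] //= _ /andP [_ H] HlB E2'.
    by rewrite -E2'.
  + by rewrite Hhead Ec.
Qed.

Lemma Qall t : Q t.
Proof.
elim/ptree_ind2: t => cs IH p Hp.
case: cs IH Hp => [|y cs] IH Hp.
- exists (fun _ => ord0); split => // j; by rewrite Hp.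
- have [c [H1 H2 H3 _ _]] := @LL (y :: cs) IH 0 p None isT Hp isT.
  by exists c.
Qed.

Theorem lemma4 (F : fan) :
  exists c : vertex -> 'I_7,
    [/\ is_hom F c, val (c (fan_root F)) = 0,
        val (c (fl F)) <> 0 & val (c (ll F)) <> 0].
Proof.
case: F => [[cs] p Hnl Hps].
rewrite /is_hom /fan_arcs /path_arcs /fl /ll /leaves /fan_root /= in Hps *.
case: cs Hnl Hps => [|y cs] // _ Hps.
have [c [H1 H2 H3 /andP [H4 H5] _]] := @LL (y :: cs) (allP_all _ Qall) 0 p None isT Hps isT.
exists c; split.
- move=> e; rewrite mem_cat => /orP [He | /mapP [j Hj ->]].
  + exact: H2.
  + move: Hj; rewrite mem_iota add0n => /andP [_ Hj].
    by move: (H3 j Hj); rewrite /oarc; case: (nth true p j).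
- by rewrite H1.
- exact/eqP.
- exact/eqP.
Qed.
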